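(* For all integers $m,n\ge1$, $$T_{2m,n}(q)=\sum_{r=0}^{m-1}(-1)^r\binom{2m}{r}\frac{(1-q^{n(m-r)})(1-q^{(n+1)(m-r)})q^{rn}}{(1-q)^{2m}(1+q^{m-r})}.$$
   Context: $q$ is an indeterminate. For integers $m,n\ge1$, $$T_{m,n}(q)=\sum_{k=1}^{n}(-1)^{n-k}\left(\frac{1-q^k}{1-q}\right)^{m}q^{\frac m2(n-k)}.$$ *)

(* Defs.v *)
From HB Require Import structures.
From mathcomp Require Import all_boot all_order all_algebra.
Set Implicit Arguments. Unset Strict Implicit. Unset Printing Implicit Defensive.
Import Order.TTheory GRing.Theory Num.Theory.
Local Open Scope ring_scope.

(* T_{m,n}(q) = sum_{k=1}^n (-1)^{n-k} ((1-q^k)/(1-q))^m q^{(m/2)(n-k)}.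
   Because of the half-integer exponent q^{m/2}, we parametrize by a
   square root s of q (q := s^2), so that q^{(m/2)(n-k)} = s^{m(n-k)}. *)
Definition Tmn (F : fieldType) (s : F) (m n : nat) : F :=
  let q := s ^+ 2 in
  \sum_(1 <= k < n.+1)
     (-1) ^+ (n - k) * ((1 - q ^+ k) / (1 - q)) ^+ m * s ^+ (m * (n - k)).

(* Main.v *)
Require Import Defs.
From HB Require Import structures.
From mathcomp Require Import all_boot all_order all_algebra.
From mathcomp Require Import ring zify.
Import Order.TTheory GRing.Theory Num.Theory.
Local Open Scope ring_scope.
Set Implicit Arguments.
Set Warnings "-notation-overridden -ambiguous-paths".

Lemma binexp (R : comNzRingType) (N : nat) (y : R) :
  (1 - y) ^+ N = \sum_(0 <= j < N.+1) (-1) ^+ j * ('C(N, j))%:R * y ^+ j.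
Proof.
rewrite exprDn big_mkord; apply: eq_bigr => i _.
by rewrite expr1n mul1r (exprNn y) -mulr_natl; ring.
Qed.

Lemma sgn_rev (R : comNzRingType) (m r : nat) : (r <= 2 * m)%N ->
  (-1) ^+ (2 * m - r) = (-1) ^+ r :> R.
Proof.
move=> h; rewrite -signr_odd -(signr_odd _ r); congr (_ ^+ _).
rewrite oddB // oddM /=. by case: (odd r).
Qed.

Lemma split_bin (R : comNzRingType) (m : nat) (y : R) :
  (1 - y) ^+ (2 * m) =
  \sum_(0 <= r < m) (-1) ^+ r * ('C(2 * m, r))%:R * y ^+ r
  + (-1) ^+ m * ('C(2 * m, m))%:R * y ^+ m
  + \sum_(0 <= r < m) (-1) ^+ r * ('C(2 * m, r))%:R * y ^+ (2 * m - r).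
Proof.
rewrite binexp (@big_cat_nat _ _ _ m 0 (2 * m).+1) //=; last by lia.
rewrite (@big_cat_nat _ _ _ m.+1 m (2 * m).+1) //=; last by lia.
rewrite big_nat1 addrA; congr (_ + _).
rewrite -{1}(add0n m.+1) big_addn.
have -> : ((2 * m).+1 - m.+1 = m)%N by lia.
rewrite big_nat_rev /=.
apply: eq_big_nat => i /andP [_ hi].
have -> : (0 + m - i.+1 + m.+1 = 2 * m - i)%N by lia.
rewrite sgn_rev; last by lia.
by rewrite bin_sub //; lia.
Qed.

Lemma key (R : comNzRingType) (m : nat) (y : R) : (0 < m)%N ->
  \sum_(0 <= r < m) (-1) ^+ r * ('C(2 * m, r))%:R * y ^+ r * (1 - y ^+ (m - r)) ^+ 2
  = (1 - y) ^+ (2 * m).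
Proof.
move=> hm.
have h1 := @split_bin R m 1.
rewrite subrr expr0n muln_eq0 /= (gtn_eqF hm) in h1.
set a := fun r => (-1) ^+ r * ('C(2 * m, r))%:R : R.
have e : forall r, (0 <= r < m)%N ->
   (-1) ^+ r * ('C(2 * m, r))%:R * y ^+ r * (1 - y ^+ (m - r)) ^+ 2
   = (a r * y ^+ r + (y ^+ m *+ 2) * (- a r)) + a r * y ^+ (2 * m - r).
  move=> r /andP[_ hr]; rewrite /a.
  have -> : (2 * m - r = r + (m - r) + (m - r))%N by lia.
  have -> : y ^+ m = y ^+ r * y ^+ (m - r) by rewrite -exprD; congr (_ ^+ _); lia.
  rewrite !exprD; ring.
rewrite (eq_big_nat _ _ e) !big_split /= -mulr_sumr (@split_bin R m y).
have -> : (-1) ^+ m * ('C(2 * m, m))%:R = - (\sum_(0 <= r < m) a r) *+ 2.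
  move: h1; rewrite expr1n mulr1.
  under eq_bigr do rewrite expr1n mulr1.
  under [X in _ = _ + _ + X]eq_bigr do rewrite expr1n mulr1.
  move=> h1.
  have h2 : \sum_(0 <= r < m) a r + (-1) ^+ m * ('C(2 * m, m))%:R + \sum_(0 <= r < m) a r = 0.
    by rewrite /a -h1.
  set S := \sum_(0 <= r < m) a r in h2 *.
  rewrite -[LHS]subr0 -h2; ring.
rewrite sumrN /a; ring.
Qed.
Lemma term_id (F : fieldType) (q : F) (m n r : nat) : (r < m)%N ->
  1 + q ^+ (m - r) != 0 ->
  (-1) ^+ r * ('C(2 * m, r))%:R *
     ((1 - q ^+ (n.+1 * (m - r))) * (1 - q ^+ (n.+2 * (m - r))) * q ^+ (r * n.+1))
     / (1 + q ^+ (m - r))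
  + q ^+ m * ((-1) ^+ r * ('C(2 * m, r))%:R *
     ((1 - q ^+ (n * (m - r))) * (1 - q ^+ (n.+1 * (m - r))) * q ^+ (r * n))
     / (1 + q ^+ (m - r)))
  = (-1) ^+ r * ('C(2 * m, r))%:R * (q ^+ n.+1) ^+ r * (1 - (q ^+ n.+1) ^+ (m - r)) ^+ 2.
Proof.
move=> hr hu.
have hm : q ^+ m = q ^+ r * q ^+ (m - r) by rewrite -exprD; congr (_ ^+ _); lia.
rewrite hm -!exprM.
have -> : (n.+1 * r = r * n.+1)%N by lia.
have -> : (n.+1 * (m - r) = (m - r) * n + (m - r))%N by lia.
have -> : (n.+2 * (m - r) = (m - r) * n + (m - r) + (m - r))%N by lia.
have -> : (n * (m - r) = (m - r) * n)%N by lia.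
rewrite !exprD !exprM.
rewrite exprS.
by field.
Qed.

Lemma T0 (F : fieldType) (s : F) M : Tmn s M 0 = 0.
Proof. by rewrite /Tmn big_geq. Qed.

Lemma Trec (F : fieldType) (s : F) M n :
  Tmn s M n.+1 = ((1 - (s ^+ 2) ^+ n.+1) / (1 - s ^+ 2)) ^+ M - s ^+ M * Tmn s M n.
Proof.
rewrite /Tmn big_nat_recr //= subnn expr0 mul1r muln0 expr0 mulr1 addrC.
congr (_ + _); rewrite mulr_sumr -sumrN; apply: eq_big_nat => k /andP[_ hk].
have -> : (n.+1 - k = (n - k).+1)%N by lia.
rewrite exprS mulnS exprD; ring.
Qed.

Theorem lemma2p2 (F : fieldType) (s : F) (m n : nat) :
  (1 <= m)%N -> (1 <= n)%N ->
  s ^+ 2 != 1 ->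
  (forall r : nat, (r < m)%N -> 1 + (s ^+ 2) ^+ (m - r) != 0) ->
  Tmn s (2 * m) n =
  \sum_(0 <= r < m)
     (-1) ^+ r * ('C(2 * m, r))%:R *
     ((1 - (s ^+ 2) ^+ (n * (m - r))) * (1 - (s ^+ 2) ^+ (n.+1 * (m - r)))
        * (s ^+ 2) ^+ (r * n))
     / ((1 - s ^+ 2) ^+ (2 * m) * (1 + (s ^+ 2) ^+ (m - r))).
Proof.
move=> hm _ hq hu.
set q := s ^+ 2.
have hq1 : 1 - q != 0 by rewrite subr_eq0 eq_sym.
have hD : (1 - q) ^+ (2 * m) != 0 by rewrite expf_neq0.
pose B n := \sum_(0 <= r < m) (-1) ^+ r * ('C(2 * m, r))%:R *
     ((1 - q ^+ (n * (m - r))) * (1 - q ^+ (n.+1 * (m - r))) * q ^+ (r * n))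
     / (1 + q ^+ (m - r)).
have claim : forall n, Tmn s (2 * m) n * (1 - q) ^+ (2 * m) = B n.
  elim=> [|k IH].
    rewrite T0 mul0r /B big1_seq // => r _.
    by rewrite mul0n expr0 subrr !mul0r mulr0 mul0r.
  rewrite Trec mulrBl -mulrA IH -exprMn divfK // (exprM s 2 m) -/q.
  apply/eqP; rewrite subr_eq eq_sym; apply/eqP.
  rewrite /B mulr_sumr -big_split /= -(@key _ m (q ^+ k.+1) hm).
  apply: eq_big_nat => r /andP[_ hr].
  by rewrite term_id // hu.
have -> : Tmn s (2 * m) n = B n / (1 - q) ^+ (2 * m) by rewrite -claim mulfK.
rewrite /B mulr_suml; apply: eq_big_nat => r /andP[_ hr].
rewrite invfM; ring.
Qed.
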